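(* Let $d$ be odd and $n\ge d+1$. Then: (i) if $n=d+1$, $C^d_n=A_n$; (ii) if $n=d+2$, $C^d_n=A_n\cap(S_{\frac{n-1}{2}}\times S_{\frac{n+1}{2}})$, where $S_{\frac{n-1}{2}}$ permutes the even indices and $S_{\frac{n+1}{2}}$ permutes the odd indices in $\{1,\dots,n\}$; (iii) if $n\ge d+3$ and $\frac{d+1}{2}$ is even, $C^d_n\cong\mathbb Z/2$; (iv) if $n\ge d+3$ and $\frac{d+1}{2}$ is odd, $C^d_n$ is trivial.
   Context: For $n\ge d+1$, let $C^d_n\subseteq S_n$ be the subgroup of permutations $\sigma$ with the following property: for all $x_1,\dots,x_n\in\mathbb R^d$ such that the $(d+1)\times n$ matrix with columns $\binom{1}{x_1},\dots,\binom{1}{x_n}$ has all maximal minors positive, the matrix with columns $\binom{1}{x_{\sigma(1)}},\dots,\binom{1}{x_{\sigma(n)}}$ also has all maximal minors positive. Equivalently, $C^d_n$ is the stabiliser, under column permutation, of the set of such positive matrices. $A_n$ is the alternating group. *)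

(* Defs.v *)
From HB Require Import structures.
From mathcomp Require Import all_boot all_order all_algebra all_fingroup all_solvable.
From mathcomp Require Import boolp reals.
Set Implicit Arguments. Unset Strict Implicit. Unset Printing Implicit Defensive.
Import Order.TTheory GRing.Theory Num.Theory.
Local Open Scope ring_scope.

(* The (d+1) x n matrix whose j-th column is (1, x_j). Points are indexed 0..n-1. *)
Definition lift_mx (R : realType) (d n : nat) (x : 'I_n -> 'cV[R]_d) : 'M[R]_(1 + d, n) :=
  col_mx (const_mx 1) (\matrix_(i < d, j < n) x j i ord0).

Definition positive_config (R : realType) (d n : nat) (x : 'I_n -> 'cV[R]_d) : Prop :=
  forall f : 'I_(1 + d) -> 'I_n,
    (forall i j : 'I_(1 + d), (i < j)%N -> (f i < f j)%N) ->
    0 < \det (colsub f (lift_mx x)).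

Definition Cdn (R : realType) (d n : nat) : {set 'S_n} :=
  [set s : 'S_n | `[< forall x : 'I_n -> 'cV[R]_d,
        positive_config x -> positive_config (fun j => x (s j)) >] ].

(* Main.v *)
Require Import Defs.
From HB Require Import structures.
From mathcomp Require Import all_boot all_order all_algebra all_fingroup all_solvable.
From mathcomp Require Import boolp reals.
From mathcomp Require Import zify lra.
Import Order.TTheory GRing.Theory Num.Theory.

Set Implicit Arguments. Unset Strict Implicit. Unset Printing Implicit Defensive.

Section Comb.
Variables (n : nat) (s : 'S_n).

Definition ee (x y : 'I_n) : bool := (x < y) (+) (s x < s y).
Definition PP (S : {set 'I_n}) : bool :=
  \big[addb/false]_(x in S) \big[addb/false]_(y in S) ((x < y) && ee x y).
Definition GG (x : 'I_n) (U : {set 'I_n}) : bool := \big[addb/false]_(u in U) ee x u.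
Definition Good (k : nat) := forall S : {set 'I_n}, #|S| = k -> PP S = false.

Lemma ltn_flip (a b : nat) : a != b -> (b < a) = ~~ (a < b).
Proof. by move=> h; rewrite ltnNge leq_eqVlt (negbTE h). Qed.

Lemma ee_sym x y : x != y -> ee x y = ee y x.
Proof.
move=> nxy; have nsxy : s x != s y by rewrite (inj_eq perm_inj).
rewrite /ee (ltn_flip nxy) (ltn_flip nsxy).
by case: (x < y); case: (s x < s y).
Qed.

Lemma ee_refl x : ee x x = false.
Proof. by rewrite /ee !ltnn. Qed.

Lemma GG_U1 x w (V : {set 'I_n}) : w \notin V -> GG x (w |: V) = ee x w (+) GG x V.
Proof. by move=> wV; rewrite /GG big_setU1. Qed.

Lemma PP_U1 x (U : {set 'I_n}) : x \notin U -> PP (x |: U) = PP U (+) GG x U.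
Proof.
move=> xU; rewrite /PP big_setU1 //= big_setU1 //= ltnn /=.
have -> : \big[addb/false]_(i in U) \big[addb/false]_(y in x |: U) ((i < y) && ee i y)
   = \big[addb/false]_(i in U) (((i < x) && ee i x) (+)
        \big[addb/false]_(y in U) ((i < y) && ee i y)).
  by apply: eq_bigr => i _; rewrite big_setU1.
rewrite big_split /= /GG.
have -> : \big[addb/false]_(u in U) ee x u =
   \big[addb/false]_(i in U) ((x < i) && ee x i) (+)
   \big[addb/false]_(i in U) ((i < x) && ee i x).
  rewrite -big_split /=; apply: eq_bigr => u uU.
  have nux : u != x by apply/eqP => E; rewrite -E uU in xU.
  rewrite (ee_sym nux).
  case: (ltngtP u x) => [h|h|/val_inj h] /=; last by rewrite h eqxx in nux.
  - by [].
  - by rewrite addbF.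
move: (\big[addb/false]_(i in U) ((x < i) && ee x i)).
move: (\big[addb/false]_(i in U) ((i < x) && ee i x)).
move: (\big[addb/false]_(i in U) \big[addb/false]_(y in U) ((i < y) && ee i y)).
by do 3 case.
Qed.

Lemma iter_addb c j : iter j (addb c) false = c && odd j.
Proof. by elim: j => [|j IH] /=; [rewrite andbF | rewrite IH; case: (odd j); case: (c)]. Qed.

Lemma exists_set (sq : seq 'I_n) j : j + size sq <= n ->
  exists V : {set 'I_n}, #|V| = j /\ (forall v, v \in V -> v \notin sq).
Proof.
move=> hj.
have hA : j <= #|[set v | v \notin sq]|.
  have -> : [set v | v \notin sq] = ~: [set v in sq] by apply/setP => v; rewrite !inE.
  have hB : #|[set v in sq]| <= size sq.
    rewrite (eq_card (B:=mem sq)) ?card_size // => v; by rewrite inE.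
  have := cardsC [set v in sq]; rewrite card_ord => hc.
  lia.
set A := [set v | v \notin sq] in hA.
suff : exists V : {set 'I_n}, #|V| = j /\ V \subset A.
  case=> V [cV sVA]; exists V; split => // v vV.
  by have := subsetP sVA v vV; rewrite inE.
elim: j hA {hj} => [|j IH] hA; first by exists set0; rewrite cards0 sub0set.
have [V [cV sVA]] := IH (ltnW hA).
have : 0 < #|A :\: V|.
  rewrite cardsD (setIidPr sVA) cV; lia.
rewrite card_gt0 => /set0Pn [v]; rewrite inE => /andP [vV vA].
exists (v |: V); split; first by rewrite cardsU1 vV cV.
by rewrite subUset sub1set vA sVA.
Qed.

Variable k : nat.
Hypotheses (k_even : ~~ odd k) (k_gt0 : 0 < k) (kn : k.+2 <= n) (good : Good k).

Lemma step1 (U : {set 'I_n}) x y : #|U| = k.-1 -> x \notin U -> y \notin U -> GG x U = GG y U.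
Proof.
move=> cU xU yU.
have hx := @good (x |: U); have hy := @good (y |: U).
rewrite PP_U1 // in hx; rewrite PP_U1 // in hy.
rewrite cardsU1 xU cU in hx; rewrite cardsU1 yU cU in hy.
have e1 : (~~ false) + k.-1 = k by rewrite /=; lia.
move: (hx e1) (hy e1); case: (PP U); case: (GG x U); case: (GG y U) => //.
Qed.

Lemma step2 x y z w : x != y -> x != z -> x != w -> y != z -> y != w -> z != w ->
  ee x w (+) ee y w = ee x z (+) ee y z.
Proof.
move=> xy xz xw yz yw zw.
have [V [cV hV]] := @exists_set [:: x; y; z; w] (k.-2) ltac:(rewrite /=; lia).
have nV v : v \in [:: x; y; z; w] -> v \notin V.
  by move=> h; apply/negP => /hV; rewrite h.
have xV : x \notin V by apply: nV; rewrite !inE eqxx.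
have yV : y \notin V by apply: nV; rewrite !inE eqxx !orbT.
have zV : z \notin V by apply: nV; rewrite !inE eqxx !orbT.
have wV : w \notin V by apply: nV; rewrite !inE eqxx !orbT.
have cw : #|w |: V| = k.-1 by rewrite cardsU1 wV cV; lia.
have cz : #|z |: V| = k.-1 by rewrite cardsU1 zV cV; lia.
have H1 := @step1 (w |: V) x y cw
  ltac:(by rewrite in_setU1 (negbTE xw) xV) ltac:(by rewrite in_setU1 (negbTE yw) yV).
have H2 := @step1 (z |: V) x y cz
  ltac:(by rewrite in_setU1 (negbTE xz) xV) ltac:(by rewrite in_setU1 (negbTE yz) yV).
rewrite !GG_U1 // in H1 H2.
move: H1 H2; case: (ee x w); case: (ee y w); case: (ee x z); case: (ee y z);
  case: (GG x V); case: (GG y V) => //.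
Qed.

Lemma step3 x y z : x != y -> x != z -> y != z -> ee x z = ee y z.
Proof.
move=> xy xz yz.
have [V [cV hV]] := @exists_set [:: x; y; z] (k.-2) ltac:(rewrite /=; lia).
have nV v : v \in [:: x; y; z] -> v \notin V.
  by move=> h; apply/negP => /hV; rewrite h.
have xV : x \notin V by apply: nV; rewrite !inE eqxx.
have yV : y \notin V by apply: nV; rewrite !inE eqxx !orbT.
have zV : z \notin V by apply: nV; rewrite !inE eqxx !orbT.
have cz : #|z |: V| = k.-1 by rewrite cardsU1 zV cV; lia.
have H2 := @step1 (z |: V) x y cz
  ltac:(by rewrite in_setU1 (negbTE xz) xV) ltac:(by rewrite in_setU1 (negbTE yz) yV).
rewrite !GG_U1 // in H2.
have HG : GG x V (+) GG y V = false.
  rewrite /GG -big_split /=.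
  rewrite (eq_bigr (fun _ => ee x z (+) ee y z)); last first.
    move=> v vV.
    have := hV v vV; rewrite !inE !negb_or => /andP [vx /andP [vy vz]].
    apply: step2 => //; by rewrite eq_sym.
  rewrite big_const iter_addb cV.
  have -> : odd k.-2 = false.
    have hk : k = (k.-2).+2 by move: k_even k_gt0; case: k => [|[|m]] //.
    by move: k_even; rewrite hk /= negbK => /negbTE.
  by rewrite andbF.
move: H2 HG; case: (ee x z); case: (ee y z); case: (GG x V); case: (GG y V) => //.
Qed.

Lemma step3' x y z : x != z -> y != z -> ee x z = ee y z.
Proof.
move=> xz yz; case: (eqVneq x y) => [-> // | xy]; exact: step3.
Qed.

Lemma ee_const a b c d : a != b -> c != d -> ee a b = ee c d.
Proof.
move=> ab cd; case: (eqVneq c b) => [cb | cb].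
  subst c; rewrite (@step3' a d b) // ?(ee_sym cd) //; by rewrite eq_sym.
rewrite (@step3' a c b) // (ee_sym cb) (@step3' b d c) ?(ee_sym cd) //;
  by rewrite eq_sym.
Qed.
End Comb.

Lemma incr_id n (f : 'I_n -> 'I_n) :
  (forall x y : 'I_n, x < y -> f x < f y) -> forall x, f x = x.
Proof.
move=> inc.
have lo : forall i (hi : i < n), i <= f (Ordinal hi).
  elim=> [//|i IH] hi.
  have hi' : i < n by lia.
  have := inc (Ordinal hi') (Ordinal hi) (ltnSn i).
  have := IH hi'; lia.
have up : forall j i (hi : i < n), i + j = n.-1 -> f (Ordinal hi) <= i.
  elim=> [|j IH] i hi hij.
    have := ltn_ord (f (Ordinal hi)); lia.
  have hi' : i.+1 < n by lia.
  have := inc (Ordinal hi) (Ordinal hi') (ltnSn i).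
  have := IH i.+1 hi' ltac:(lia); lia.
move=> [x hx]; apply: val_inj => /=.
have := lo x hx; have := up (n.-1 - x) x hx ltac:(lia); lia.
Qed.

Definition rv n : 'S_n := perm (@rev_ord_inj n).

Lemma rvE n (x : 'I_n) : rv n x = rev_ord x.
Proof. by rewrite permE. Qed.

Lemma PP_const n (s : 'S_n) c :
  (forall x y, x != y -> ee s x y = c) ->
  forall S, PP s S = c && odd 'C(#|S|, 2).
Proof.
move=> hc S; move Hj: #|S| => j; elim: j S Hj => [|j IH] S Hj.
  move/eqP: Hj; rewrite cards_eq0 => /eqP ->.
  by rewrite /PP big_set0 andbF.
have : 0 < #|S| by rewrite Hj.
rewrite card_gt0 => /set0Pn [x xS].
have xU : x \notin S :\ x by rewrite !inE eqxx.
have cU : #|S :\ x| = j by have := cardsD1 x S; rewrite xS Hj add1n => -[].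
rewrite -(setD1K xS) PP_U1 // (IH _ cU).
rewrite /GG (eq_bigr (fun _ => c)); last first.
  move=> u; rewrite !inE => /andP [ux _]; apply: hc; by rewrite eq_sym.
rewrite big_const iter_addb cU binS bin1 oddD.
by case: (c); case: (odd _); case: (odd _).
Qed.

Lemma ee1 n (x y : 'I_n) : ee 1 x y = false.
Proof. by rewrite /ee !perm1 addbb. Qed.

Lemma eerv n (x y : 'I_n) : x != y -> ee (rv n) x y = true.
Proof.
move=> xy; rewrite /ee !rvE /=.
have hx := ltn_ord x; have hy := ltn_ord y.
have : (x : nat) != y by [].
case: (ltngtP x y) => h _; last by move/val_inj: h xy => ->; rewrite eqxx.
- have -> : (n - x.+1 < n - y.+1) = false by apply/negbTE; rewrite -leqNgt; lia.
  by [].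
- have -> : (n - x.+1 < n - y.+1) = true by apply/idP; lia.
  by [].
Qed.

Lemma odd_bin2 k : ~~ odd k -> odd 'C(k, 2) = odd k./2.
Proof.
move=> ke; have [m hm] : exists m, k = m.*2.
  by exists k./2; rewrite -{1}(odd_double_half k) (negbTE ke) add0n.
subst k; rewrite bin2 -doubleMl doubleK doubleK oddM.
clear ke; case: m => [//|m] /=; by rewrite odd_double andbT.
Qed.

Lemma classify n (s : 'S_n) k : ~~ odd k -> 0 < k -> k.+2 <= n ->
  Good s k <-> (s = 1%g \/ (s = rv n /\ ~~ odd k./2)).
Proof.
move=> ke k0 kn; split; last first.
  case=> [-> | [-> hk]] S hS.
    by rewrite (@PP_const _ _ false) // => x y _; rewrite ee1.
  rewrite (@PP_const _ _ true); last by move=> x y; exact: eerv.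
  by rewrite hS odd_bin2 // (negbTE hk).
move=> good.
have h0 : 0 < n by lia.
have h1 : 1 < n by lia.
pose o0 := Ordinal h0; pose o1 := Ordinal h1.
have hc : forall x y, x != y -> ee s x y = ee s o0 o1.
  by move=> x y xy; apply: (ee_const ke k0 kn good).
have nsxy : forall x y : 'I_n, x != y -> s x != s y.
  by move=> x y xy; rewrite (inj_eq perm_inj).
case E: (ee s o0 o1).
- right.
  have inc : forall x y : 'I_n, x < y -> rev_ord (s x) < rev_ord (s y).
    move=> x y xy.
    have nxy : x != y by apply/eqP => E'; rewrite E' ltnn in xy.
    have := hc x y nxy; rewrite E /ee xy /= => hh0.
    have h : s y < s x by rewrite (ltn_flip (nsxy _ _ nxy)).
    have := ltn_ord (s x); have := ltn_ord (s y); lia.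
  have := incr_id inc => H.
  split; last first.
    have cK : #|[set x : 'I_n | (x : nat) < k]| = k.
      rewrite -[k in RHS](card_ord k).
      rewrite -(@card_imset _ _ (fun i : 'I_k => widen_ord (ltnW (ltnW kn)) i));
        last by move=> a b /(congr1 val) /= /val_inj.
      apply: eq_card => x; rewrite inE; apply/idP/imsetP.
        by move=> xk; exists (Ordinal xk) => //; apply: val_inj.
      by case=> a _ ->; rewrite /= ltn_ord.
    have := @good _ cK; rewrite (@PP_const _ _ true); last first.
      by move=> x y xy; rewrite hc.
    by rewrite cK odd_bin2 // /= => ->.
  by apply/permP => x; rewrite rvE -{2}(H x) rev_ordK.
- left.
  have inc : forall x y : 'I_n, x < y -> s x < s y.
    move=> x y xy.
    have nxy : x != y by apply/eqP => E'; rewrite E' ltnn in xy.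
    by have := hc x y nxy; rewrite E /ee xy /= => /negbFE.
  by apply/permP => x; rewrite perm1 (incr_id inc).
Qed.

Lemma xor_false a b : a (+) b = false -> a = b.
Proof. by case: a; case: b. Qed.

Lemma xor_lt m n : \big[addb/false]_(u < n) (m < u) = odd (n - m.+1).
Proof.
elim: n => [|n IH]; first by rewrite big_ord0.
rewrite big_ord_recr /= IH.
case: (ltnP m n) => h.
  have -> : n.+1 - m.+1 = (n - m.+1).+1 by lia.
  by rewrite /=; case: (odd _).
have -> : n - m.+1 = 0 by lia.
have -> : n.+1 - m.+1 = 0 by lia.
by [].
Qed.

Lemma GG_all n (s : 'S_n) p : GG s p (setT :\ p) = odd p (+) odd (s p).
Proof.
have -> : GG s p (setT :\ p) = \big[addb/false]_u ee s p u.
  rewrite [RHS](eq_bigl (fun u => u \in [set: 'I_n])); last by move=> u; rewrite /= inE.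
  by rewrite /GG [RHS](big_setD1 p) ?inE // ee_refl.
rewrite /ee big_split /= xor_lt.
rewrite (reindex_inj (@perm_inj _ s^-1)) /=.
under eq_bigr do rewrite permKV.
rewrite xor_lt.
have hp := ltn_ord p; have hsp := ltn_ord (s p).
rewrite !oddB //= .
by do 3 case: (odd _).
Qed.

Lemma good_eqT k (s : 'S_k) : Good s k <-> PP s setT = false.
Proof.
split=> [g | h S hS]; first by apply: g; rewrite cardsT card_ord.
have -> : S = setT by apply/eqP; rewrite eqEcard subsetT /= cardsT card_ord hS.
exact: h.
Qed.

Lemma good_eqT1 k (s : 'S_k.+1) : ~~ odd k ->
  PP s setT = odd_perm s ->
  Good s k <-> (~~ odd_perm s /\ forall i, odd (s i) == odd i).
Proof.
move=> ke PT.
have key : forall p, PP s (setT :\ p) = odd_perm s (+) (odd p (+) odd (s p)).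
  move=> p; rewrite -PT.
  have := @PP_U1 _ s p (setT :\ p); rewrite setD1K ?inE ?eqxx // GG_all => -> //.
  by rewrite -addbA addbb addbF.
have goodE : Good s k <-> forall p, PP s (setT :\ p) = false.
  split=> [g p | h S hS].
    apply: g; by have := cardsD1 p [set: 'I_k.+1]; rewrite in_setT cardsT card_ord add1n => -[] <-.
  have cD : forall p : 'I_k.+1, #|[set: 'I_k.+1] :\ p| = k.
    by move=> p; have := cardsD1 p [set: 'I_k.+1]; rewrite in_setT cardsT card_ord add1n => -[] <-.
  case: (pickP (fun p => p \notin S)) => [p pS | hn]; last first.
    have : #|S| = k.+1.
      have -> : S = setT.
        by apply/setP => x; rewrite inE; have := hn x; rewrite /= => /negbFE.
      by rewrite cardsT card_ord.
    by rewrite hS => /n_Sn.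
  have -> : S = setT :\ p; last exact: h.
  apply/eqP; rewrite eqEcard cD hS leqnn andbT.
  apply/subsetP => x xS; rewrite !inE andbT; apply/eqP => E.
  by rewrite -E xS in pS.
rewrite goodE; split.
  move=> h.
  have hp : forall p : 'I_k.+1, odd_perm s = odd p (+) odd (s p).
    move=> p; have := h p; rewrite key.
    exact: xor_false.
  case E: (odd_perm s); last first.
    split => // i; have := hp i; rewrite E.
    by case: (odd i); case: (odd (s i)).
  exfalso.
  have flip : forall i, odd (s i) = ~~ odd i.
    move=> i; have := hp i; rewrite E.
    by case: (odd i); case: (odd (s i)).
  pose O := [set i : 'I_k.+1 | odd i].
  have h1 : #|O| <= #|~: O|.
    rewrite -(card_imset O (@perm_inj _ s)); apply: subset_leq_card.
    apply/subsetP => y /imsetP [x]; rewrite !inE => xO ->.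
    by rewrite flip xO.
  have h2 : #|~: O| <= #|O|.
    rewrite -(card_imset (~: O) (@perm_inj _ s)); apply: subset_leq_card.
    apply/subsetP => y /imsetP [x]; rewrite !inE => xO ->.
    by rewrite flip xO.
  have := cardsC O; rewrite card_ord => hc.
  have hO : k.+1 = (#|O|).*2 by rewrite -addnn; lia.
  by move: ke; rewrite -[k]/(k.+1.-1) hO -!subn1 oddB ?odd_double //; lia.
case=> he hi p; rewrite key (negbTE he).
by have := hi p; case: (odd p); case: (odd (s p)).
Qed.



Section Ana.
Variables (R : realType) (d n : nat).
Local Open Scope ring_scope.

Lemma colsub_lift m (g : 'I_m -> 'I_n) (x : 'I_n -> 'cV[R]_d) :
  colsub g (lift_mx x) = lift_mx (fun j => x (g j)).
Proof.
apply/matrixP => i j; rewrite /lift_mx !mxE.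
by case: splitP => i' _; rewrite !mxE.
Qed.

Definition mom (j : 'I_n) : 'cV[R]_d := \col_(i < d) ((j : nat)%:R ^+ i.+1).

Definition Wd (h : 'I_(1 + d) -> 'I_n) := \det (colsub h (lift_mx mom)).

Lemma Wd_prod h : Wd h =
  \prod_(i < 1 + d) \prod_(j < 1 + d | (i < j)%N) ((h j : nat)%:R - (h i : nat)%:R).
Proof.
rewrite /Wd colsub_lift.
have -> : lift_mx (fun j => mom (h j)) = Vandermonde (1 + d) (\row_j ((h j : nat)%:R : R)).
  apply/matrixP => i j; rewrite /lift_mx /Vandermonde !mxE.
  case: splitP => i' -> ; rewrite !mxE.
    by rewrite ord1 expr0.
  by [].
by rewrite det_Vandermonde; apply: eq_bigr => i _; apply: eq_bigr => j _; rewrite !mxE.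
Qed.

Definition incr m (f : 'I_m -> 'I_n) := forall i j : 'I_m, (i < j)%N -> (f i < f j)%N.

Lemma incr_inj m (f : 'I_m -> 'I_n) : incr f -> injective f.
Proof.
move=> hf a b E; apply/eqP; apply/negPn/negP => ab.
case: (ltngtP a b) => h.
- by have := hf _ _ h; rewrite E ltnn.
- by have := hf _ _ h; rewrite E ltnn.
- by move/val_inj: h ab => ->; rewrite eqxx.
Qed.

Lemma Wd_pos g : incr g -> 0 < Wd g.
Proof.
move=> hg; rewrite Wd_prod; apply: prodr_gt0 => i _; apply: prodr_gt0 => j ij.
by rewrite subr_gt0 ltr_nat; apply: hg.
Qed.

Lemma det_colsub_perm (A : 'M[R]_(1 + d, n)) (g : 'I_(1 + d) -> 'I_n) (p : 'S_(1 + d)) :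
  \det (colsub (fun a => g (p a)) A) = (-1) ^+ p * \det (colsub g A).
Proof.
have -> : colsub (fun a => g (p a)) A = col_perm p (colsub g A).
  by apply/matrixP => i j; rewrite !mxE.
by rewrite col_permE det_mulmx det_perm odd_permV mulrC.
Qed.

Lemma sort_exists (h : 'I_(1 + d) -> 'I_n) : injective h ->
  exists g, exists p : 'S_(1 + d), incr g /\ forall a, h a = g (p a).
Proof.
move=> hi.
pose rk a := #|[set b | (h b < h a)%N]|.
have rk_lt a : (rk a < 1 + d)%N.
  rewrite -[X in (_ < X)%N](card_ord (1 + d)) -cardsT; apply: proper_card.
  apply/properP; split; first exact: subsetT.
  by exists a; rewrite ?inE ?ltnn.
have rk_mono a b : (h a < h b)%N -> (rk a < rk b)%N.
  move=> hab; apply: proper_card; apply/properP; split.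
    apply/subsetP => c; rewrite !inE => hc; exact: ltn_trans hc hab.
  by exists a; rewrite !inE ?ltnn.
pose rkO a : 'I_(1 + d) := Ordinal (rk_lt a).
have rkO_inj : injective rkO.
  move=> a b /(congr1 val) /= E; apply/eqP; apply/negPn/negP => ab.
  have hab : h a != h b by rewrite (inj_eq hi).
  case: (ltngtP (h a) (h b)) => c.
  - by have := rk_mono _ _ c; rewrite E ltnn.
  - by have := rk_mono _ _ c; rewrite E ltnn.
  - by move/val_inj: c hab => ->; rewrite eqxx.
pose p := perm rkO_inj.
exists (fun i => h ((p^-1)%g i)), p; split; last by move=> a; rewrite permK.
move=> i j ij.
have hne : h ((p^-1)%g i) != h ((p^-1)%g j).
  rewrite (inj_eq hi) (inj_eq perm_inj); apply/eqP => E; by rewrite E ltnn in ij.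
case: (ltngtP (h ((p^-1)%g i)) (h ((p^-1)%g j))) => // c; last first.
  by move/val_inj: c hne => ->; rewrite eqxx.
have := rk_mono _ _ c.
have -> : rk ((p^-1)%g j) = j by have := permKV p j; rewrite permE => /(congr1 val).
have -> : rk ((p^-1)%g i) = i by have := permKV p i; rewrite permE => /(congr1 val).
by rewrite ltnNge (ltnW ij).
Qed.
Lemma incr_lt m (f : 'I_m -> 'I_n) : incr f -> forall i j, (f i < f j)%N = (i < j)%N.
Proof.
move=> hf i j; apply/idP/idP; last exact: hf.
move=> h; case: (ltngtP i j) => // c.
- by have := hf _ _ c; rewrite ltnNge (ltnW h).
- by move/val_inj: c h => ->; rewrite ltnn.
Qed.

Lemma PP_img (s : 'S_n) (f : 'I_(1 + d) -> 'I_n) : incr f ->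
  PP s (f @: setT) = \big[addb/false]_(i < 1 + d) \big[addb/false]_(j < 1 + d | (i < j)%N) ee s (f i) (f j).
Proof.
move=> hf; have fi := incr_inj hf.
rewrite /PP big_imset /=; last by move=> a b _ _; apply: fi.
rewrite (eq_bigl predT); last by move=> i; rewrite inE.
apply: eq_bigr => i _.
rewrite big_imset /=; last by move=> a b _ _; apply: fi.
rewrite (eq_bigl predT); last by move=> j; rewrite inE.
rewrite [RHS]big_mkcond /=; apply: eq_bigr => j _.
by rewrite (incr_lt hf); case: (i < j)%N.
Qed.

Lemma Wd_sign (s : 'S_n) f : incr f ->
  exists2 w, 0 < w & Wd (fun a => s (f a)) = (-1) ^+ (PP s (f @: setT)) * w.
Proof.
move=> hf; rewrite Wd_prod PP_img //.
set F := fun i j : 'I_(1 + d) => ((s (f j) : nat)%:R - (s (f i) : nat)%:R : R).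
exists (\prod_(i < 1 + d) \prod_(j < 1 + d | (i < j)%N) `|F i j|).
  apply: prodr_gt0 => i _; apply: prodr_gt0 => j ij.
  rewrite normr_gt0 /F subr_eq0 eqr_nat eq_sym.
  suff : s (f i) != s (f j) by [].
  by rewrite (inj_eq perm_inj) (inj_eq (incr_inj hf)); apply/eqP => E; rewrite E ltnn in ij.
have hF : forall i j : 'I_(1 + d), (i < j)%N -> F i j = (-1) ^+ (ee s (f i) (f j)) * `|F i j|.
  move=> i j ij; rewrite /ee (hf _ _ ij) /=.
  have hne : s (f i) != s (f j).
    by rewrite (inj_eq perm_inj) (inj_eq (incr_inj hf)); apply/eqP => E; rewrite E ltnn in ij.
  case: (ltngtP (s (f i)) (s (f j))) => c /=.
  - rewrite expr0 mul1r gtr0_norm // /F subr_gt0 ltr_nat //.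
  - rewrite expr1 mulN1r ltr0_norm ?opprK // /F subr_lt0 ltr_nat //.
  - by move/val_inj: c hne => ->; rewrite eqxx.
rewrite (eq_bigr (fun i : 'I_(1 + d) => \prod_(j < 1 + d | (i < j)%N) ((-1) ^+ (ee s (f i) (f j)) * `|F i j|))); last first.
  by move=> i _; apply: eq_bigr => j ij; apply: hF.
have e0 : ((-1 : R) ^+ false = 1) := expr0 _.
rewrite (big_morph (fun b : bool => (-1) ^+ b : R) (@signr_addb R) e0).
rewrite -big_split /=; apply: eq_bigr => i _.
rewrite (big_morph (fun b : bool => (-1) ^+ b : R) (@signr_addb R) e0).
by rewrite -big_split.
Qed.
Lemma sign_eq (b c : bool) (a a' : R) : 0 < a -> 0 < a' ->
  (-1) ^+ b * a = (-1) ^+ c * a' -> b = c.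
Proof.
move=> ha ha'; case: b; case: c => //= ; rewrite ?expr0 ?expr1 ?mul1r ?mulN1r => E.
- by move: ha'; rewrite -E oppr_gt0 => /(lt_trans ha); rewrite ltxx.
- by move: ha; rewrite E oppr_gt0 => /(lt_trans ha'); rewrite ltxx.
Qed.

Lemma mom_pos : positive_config mom.
Proof. by move=> f hf; apply: Wd_pos. Qed.

Lemma pos_comp (x : 'I_n -> 'cV[R]_d) (s : 'S_n) f :
  \det (colsub f (lift_mx (fun j => x (s j)))) = \det (colsub (fun a => s (f a)) (lift_mx x)).
Proof. by rewrite !colsub_lift. Qed.

Lemma Cdn_good (s : 'S_n) : s \in Cdn R d n -> Good s (1 + d).
Proof.
rewrite inE => /asboolP H S hS.
pose h0 := fun a : 'I_(1 + d) => enum_val (cast_ord (esym hS) a).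
have h0i : injective h0.
  move=> a b /enum_val_inj /(congr1 val) /= E; exact: val_inj.
have [g [p [hg hgp]]] := sort_exists h0i.
have gS : g @: setT = S.
  apply/eqP; rewrite eqEcard; apply/andP; split.
    apply/subsetP => y /imsetP [b _ ->].
    have -> : g b = h0 ((p^-1)%g b) by rewrite hgp permKV.
    exact: enum_valP.
  by rewrite card_imset ?cardsT ?card_ord ?hS //; apply: incr_inj.
have := H mom mom_pos g hg; rewrite pos_comp -/(Wd _).
have [w w0 ->] := Wd_sign s hg.
rewrite gS; case: (PP s S) => //.
by rewrite expr1 mulN1r oppr_gt0 => /(lt_trans w0); rewrite ltxx.
Qed.

Lemma good_Cdn (s : 'S_n) : Good s (1 + d) -> s \in Cdn R d n.
Proof.
move=> G; rewrite inE; apply/asboolP => x px f hf.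
rewrite pos_comp.
have hi : injective (fun a => s (f a)).
  by move=> a b /perm_inj /(incr_inj hf).
have [g [p [hg hgp]]] := sort_exists hi.
have E : (fun a => s (f a)) = (fun a => g (p a)) by apply: funext => a; rewrite hgp.
have podd : odd_perm p = false.
  have [w w0 Ew] := Wd_sign s hf.
  have := G (f @: setT); rewrite card_imset ?cardsT ?card_ord; last exact: incr_inj.
  move=> /(_ erefl) PPf; rewrite PPf expr0 mul1r in Ew.
  move: Ew; rewrite /Wd E det_colsub_perm -/(Wd g).
  move=> Ew; apply: (sign_eq (Wd_pos hg) w0).
  by rewrite Ew expr0 mul1r.
by rewrite E det_colsub_perm podd expr0 mul1r; apply: px.
Qed.
End Ana.


Lemma Cdn_iff (R : realType) d n (s : 'S_n) : s \in Cdn R d n <-> Good s (1 + d).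
Proof. split; [exact: Cdn_good | exact: good_Cdn]. Qed.

Lemma PP_odd (R : realType) d (s : 'S_(1 + d)) : PP s setT = odd_perm s.
Proof.
have hid : incr (fun a : 'I_(1 + d) => a) by [].
have [w w0 Ew] := @Wd_sign R d (1 + d) s _ hid.
have E2 := @det_colsub_perm R d (1 + d) (lift_mx (@mom R d (1 + d))) (fun a => a) s.
rewrite -/(Wd _) -/(Wd _) in E2.
have Eimg : (fun a : 'I_(1 + d) => a) @: setT = setT.
  by apply/setP => x; rewrite inE; apply/imsetP; exists x; rewrite ?inE.
rewrite Eimg in Ew.
apply: (sign_eq w0 (@Wd_pos R d (1 + d) _ hid)).
by rewrite -Ew -E2.
Qed.

Lemma rv_order n : 1 < n -> #[rv n]%g = 2.
Proof.
move=> hn.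
have h2 : (rv n ^+ 2)%g = 1%g.
  by apply/permP => x; rewrite expgS expg1 permM !rvE rev_ordK perm1.
have h1 : rv n != 1%g.
  apply/eqP => /permP /(_ (Ordinal (ltnW hn))); rewrite rvE perm1 => /(congr1 val) /=.
  lia.
have := order_dvdn (rv n) 2; rewrite h2 eqxx => /(@dvdn_leq _ 2 erefl) hle.
have := order_gt0 (rv n); have : #[rv n]%g != 1 by rewrite order_eq1.
lia.
Qed.

Unset Implicit Arguments.
Set Strict Implicit.

Theorem proposition3p8 (R : realType) (d n : nat) :
  odd d -> (d.+1 <= n)%N ->
  [/\ n = d.+1 -> Cdn R d n = ('Alt_('I_n))%g,
      n = d.+2 -> Cdn R d n =
        [set s in ('Alt_('I_n))%g | [forall i : 'I_n, odd (s i) == odd i]],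
      (d.+3 <= n)%N -> ~~ odd (d.+1)./2 -> (Cdn R d n \isog [set: 'Z_2])%g
    & (d.+3 <= n)%N -> odd (d.+1)./2 -> Cdn R d n = 1%g].
Proof.
move=> hd hn.
have ke : ~~ odd (1 + d) by rewrite /= hd.
have k0 : 0 < 1 + d by [].
split.
- move=> En; subst n; apply/setP => s.
  transitivity (~~ odd_perm s); last exact: esym (Alt_even s).
  apply/idP/idP.
    move/Cdn_iff => /good_eqT; rewrite (PP_odd R) => ->; by [].
  move=> hs; apply/Cdn_iff; apply/good_eqT; rewrite (PP_odd R); exact: negbTE.
- move=> En; subst n; apply/setP => s; rewrite [in RHS]inE.
  rewrite (_ : s \in ('Alt_('I_d.+2))%g = ~~ odd_perm s); last exact: Alt_even s.
  have G := @good_eqT1 (1 + d) s ke (PP_odd R (d := d.+1) s).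
  apply/idP/idP.
    move/Cdn_iff/G => [h1 h2]; rewrite h1 /=; apply/forallP => i; exact: h2.
  case/andP => h1 /forallP h2; apply/Cdn_iff; apply/G; split => //.
- move=> h3 hm.
  have E : Cdn R d n = <[rv n]>%g.
    rewrite cycle2g; last by apply: rv_order; lia.
    apply/setP => s; rewrite [in RHS]in_set2.
    apply/idP/idP.
      move/Cdn_iff/(classify s ke k0 h3) => [-> | [-> _]]; by rewrite eqxx ?orbT.
    case/orP => /eqP ->; apply/Cdn_iff/(classify _ ke k0 h3); [left | right] => //.
  rewrite E isog_cyclic_card ?cycle_cyclic //.
  have c2 : #|[set: 'Z_2]| = 2 by rewrite cardsT card_ord.
  rewrite c2 prime_cyclic ?c2 //= -/(order _) (rv_order (n := n)) //; lia.
- move=> h3 hm; apply/setP => s; rewrite [in RHS]inE.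
  apply/idP/idP.
    move/Cdn_iff/(classify s ke k0 h3) => [-> | [_ h]]; first by rewrite eqxx.
    by rewrite hm in h.
  move/eqP ->; apply/Cdn_iff/(classify _ ke k0 h3); by left.
Qed.
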